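(* Let a document collection $\mathcal{D}$ be partitioned into $n$ pairwise disjoint shards $D_1,\dots,D_n$, and let $r\ge 1$ identical replicas of this partition be stored, each of the $nr$ shard replicas on its own node. Fix a query $q$ with a unique relevant document $d_q$, and let $p(j)$ be the probability that $d_q$ is stored in $D_j$ (so $\sum_{j=1}^n p(j)=1$). Each node independently fails to respond with probability $f\in[0,1]$, independently of the location of $d_q$. A selection chooses some replicas of some shards; for $1\le i\le r$ let $S_i\subseteq\{D_1,\dots,D_n\}$ be the set of shards of which at least $i$ replicas are selected (so $S_r\subseteq S_{r-1}\subseteq\dots\subseteq S_1$). Let $SP(f,\bigcup_{i=1}^r S_i)$ denote the probability that $d_q$ is found, i.e., that $d_q$ lies in a shard of which some selected replica responds. Then \[ SP\Big(f,\bigcup_{i=1}^r S_i\Big)=(1-f)\left(\sum_{D_j\in S_1}p(j)+\sum_{D_j\in S_2}f\,p(j)+\dots+\sum_{D_j\in S_r}f^{r-1}p(j)\right). \]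
   Context: Distributed search model: each node searches only its own shard replica; the query is sent to the selected replicas, and the results of nodes that fail to respond (probability $f$ each, independently) are dropped. *)

(* Defs.v *)
From mathcomp Require Import all_boot all_order all_algebra.
Set Implicit Arguments. Unset Strict Implicit. Unset Printing Implicit Defensive.
Import Order.TTheory GRing.Theory Num.Theory.
Local Open Scope ring_scope.

(* Nodes: pairs (shard j, replica k), j : 'I_n, k : 'I_r.  A selection is a
   set of nodes.  A failure pattern w : {ffun 'I_n * 'I_r -> bool} says which
   nodes fail (true = fails to respond). *)

Definition fail_weight {R : pzRingType} (n r : nat) (f : R)
  (w : {ffun 'I_n * 'I_r -> bool}) : R :=
  \prod_(x : 'I_n * 'I_r) (if w x then f else 1 - f).

Definition found (n r : nat) (sel : {set 'I_n * 'I_r}) (j : 'I_n)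
  (w : {ffun 'I_n * 'I_r -> bool}) : bool :=
  [exists k : 'I_r, ((j, k) \in sel) && ~~ w (j, k)].

Definition SP {R : pzRingType} (n r : nat) (p : 'I_n -> R) (f : R)
  (sel : {set 'I_n * 'I_r}) : R :=
  \sum_(j : 'I_n) \sum_(w : {ffun 'I_n * 'I_r -> bool})
     (if found sel j w then p j * fail_weight f w else 0).

Definition Sset (n r : nat) (sel : {set 'I_n * 'I_r}) (i : nat) : {set 'I_n} :=
  [set j : 'I_n | (i <= #|[set k : 'I_r | (j, k) \in sel]|)%N].

(* Main.v *)
Require Import Defs.
From mathcomp Require Import all_boot all_order all_algebra ring.
Import Order.TTheory GRing.Theory Num.Theory.
Local Open Scope ring_scope.

Section Aux.
Variables (R : realFieldType) (n r : nat) (f : R) (sel : {set 'I_n * 'I_r}).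

Definition mj (j : 'I_n) := #|[set k : 'I_r | (j, k) \in sel]|.

Lemma total_weight : \sum_(w : {ffun 'I_n * 'I_r -> bool}) fail_weight f w = 1.
Proof.
rewrite /fail_weight -(bigA_distr_bigA (fun x (b : bool) => if b then f else 1 - f)).
by apply: big1 => x _; rewrite big_bool /= subrKC.
Qed.

Lemma notfound_weight j :
  \sum_(w : {ffun 'I_n * 'I_r -> bool})
     (if found sel j w then 0 else fail_weight f w) = f ^+ mj j.
Proof.
pose A := [set x : 'I_n * 'I_r | (x.1 == j) && (x \in sel)].
pose G := fun (x : 'I_n * 'I_r) (b : bool) =>
  if x \in A then (if b then f else 0) else (if b then f else 1 - f).
transitivity (\sum_(w : {ffun 'I_n * 'I_r -> bool}) \prod_x G x (w x)).
  apply: eq_bigr => w _; rewrite /found /fail_weight.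
  case: existsP => [[k /andP [hs hw]] | hn].
    symmetry; rewrite (bigD1 (j, k)) //= /G inE /= eqxx hs /=.
    by rewrite (negbTE hw) mul0r.
  apply: eq_bigr => x _; rewrite /G inE.
  case: x => a k /=; case: eqP => [-> | _] //=.
  case hs: ((j, k) \in sel) => //.
  case hw: (w (j, k)) => //.
  by exfalso; apply: hn; exists k; rewrite hs hw.
rewrite -(bigA_distr_bigA (G)).
rewrite (bigID (fun x => x \in A)) /=.
rewrite [X in _ * X]big1 ?mulr1; last first.
  by move=> x /negbTE hx; rewrite big_bool /G hx /= subrKC.
rewrite (eq_bigr (fun _ => f)); last first.
  by move=> x hx; rewrite big_bool /G hx /= addr0.
rewrite prodr_const; congr (_ ^+ _).
have -> : A = [set (j, k) | k in [set k : 'I_r | (j, k) \in sel]].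
  apply/setP => [[a k]]; rewrite inE /=.
  apply/andP/imsetP => [[/eqP -> hs] | [k' hk' [-> ->]]].
    by exists k => //; rewrite inE.
  by rewrite inE in hk'; split.
rewrite card_imset //.
by move=> a b [].
Qed.

Lemma found_weight j :
  \sum_(w : {ffun 'I_n * 'I_r -> bool})
     (if found sel j w then fail_weight f w else 0) = 1 - f ^+ mj j.
Proof.
rewrite -total_weight -notfound_weight -sumrB; apply: eq_bigr => w _.
by case: ifP; rewrite ?subr0 ?subrr.
Qed.

Lemma geom m : (m <= r)%N ->
  (1 - f) * \sum_(i < r) (if (i < m)%N then f ^+ i else 0) = 1 - f ^+ m.
Proof.
move=> hm.
rewrite -big_mkcond /= -(big_ord_widen_cond _ (fun _ => true) (fun i => f ^+ i) hm).
elim: m hm => [|m IH] hm; first by rewrite big_ord0 mulr0 expr0 subrr.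
rewrite big_ord_recr /= mulrDr IH ?(ltnW hm) // exprS; ring.
Qed.

End Aux.

Theorem lemma1 (R : realFieldType) (n r : nat) (p : 'I_n -> R) (f : R)
  (sel : {set 'I_n * 'I_r}) :
  (1 <= r)%N ->
  (forall j, 0 <= p j) -> \sum_(j : 'I_n) p j = 1 ->
  0 <= f <= 1 ->
  SP p f sel =
  (1 - f) * \sum_(i < r) f ^+ i * \sum_(j in Sset sel i.+1) p j.
Proof.
move=> _ _ _ _.
rewrite /SP.
transitivity (\sum_(j : 'I_n) p j * (1 - f ^+ @mj n r sel j)).
  apply: eq_bigr => j _; rewrite -found_weight mulr_sumr.
  by apply: eq_bigr => w _; case: ifP; rewrite ?mulr0.
transitivity (\sum_(j : 'I_n) p j * ((1 - f) *
   \sum_(i < r) (if (i < @mj n r sel j)%N then f ^+ i else 0))).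
  apply: eq_bigr => j _; rewrite geom //.
  rewrite /mj; apply: leq_trans (max_card _) _; by rewrite card_ord.
rewrite mulr_sumr; under eq_bigr do rewrite mulr_sumr mulr_sumr.
rewrite exchange_big /=; apply: eq_big => // i _.
rewrite mulr_sumr mulr_sumr [RHS]big_mkcond /=; apply: eq_big => // j _.
rewrite /Sset inE /mj; case: ifP => _; rewrite ?mulr0 //; ring.
Qed.
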